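(* Let $\pi:L_{\mathcal F}\to L_{\mathcal G}$ satisfy (REG). For every finite partition $\Gamma$ of $\Omega$ into $\mathcal G$-measurable sets, every $X\in L_{\mathcal F}$ and $Q\in L^*_{\mathcal F}\cap\mathcal P$, the set \[\mathcal A^\Gamma_Q(X):=\{\pi^\Gamma(\xi)\mid \xi\in L_{\mathcal F},\ E_Q[\xi\mid\mathcal G]\ge_Q E_Q[X\mid\mathcal G]\}\] is downward directed; hence there exists a sequence $(\eta^Q_m)_{m\ge1}\subseteq L_{\mathcal F}$ with $E_Q[\eta^Q_m\mid\mathcal G]\ge_Q E_Q[X\mid\mathcal G]$ for all $m$ and $\pi^\Gamma(\eta^Q_m)\downarrow K^\Gamma(X,Q)$ as $m\uparrow\infty$.
   Context: Let $(\Omega,\mathcal F,\mathbb P)$ be a probability space and $\mathcal G\subseteq\mathcal F$ a sub-$\sigma$-algebra. (In)equalities hold $\mathbb P$-a.s. unless a measure is indicated ($\ge_Q$: $Q$-a.s.); $\inf$ is the $\mathbb P$-essential infimum. $L_{\mathcal F}\subseteq L^0(\Omega,\mathcal F,\mathbb P)$, $L_{\mathcal G}\subseteq L^0(\Omega,\mathcal G,\mathbb P)$ are vector lattices closed under multiplication by indicators of $\mathcal F$- (resp. $\mathcal G$-) measurable sets; the order continuous dual $L^*_{\mathcal F}$ of $(L_{\mathcal F},\ge)$ is a lattice contained in $L^1(\Omega,\mathcal F,\mathbb P)$ (functionals $X\mapsto E_{\mathbb P}[ZX]$), closed under multiplication by indicators of sets in $\mathcal F$. $\mathcal P$ = densities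 of probabilities $Q\ll\mathbb P$. (REG): $\pi(X\mathbf 1_A+Y\mathbf 1_{A^c})=\pi(X)\mathbf 1_A+\pi(Y)\mathbf 1_{A^c}$ for $A\in\mathcal G$. For $A\in\mathcal G$, $\pi_A(X):=\operatorname{ess\,sup}_{\omega\in A}\pi(X)(\omega)$; $\pi^\Gamma(X):=\sum_{A\in\Gamma}\pi_A(X)\mathbf 1_A$; $K^\Gamma(X,Q):=\inf\mathcal A^\Gamma_Q(X)$. A set of random variables is downward directed if any two elements have a common lower bound in the set. *)

(* Defs.v *)
From HB Require Import structures.
From mathcomp Require Import all_boot all_order all_algebra.
From mathcomp Require Import all_classical all_reals all_analysis.
From mathcomp Require Import measurable_realfun.
Set Implicit Arguments. Unset Strict Implicit. Unset Printing Implicit Defensive.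
Import Order.TTheory GRing.Theory Num.Theory.
Import numFieldNormedType.Exports.
Local Open Scope classical_set_scope.
Local Open Scope ring_scope.

Section defs.
Context (d : measure_display) (T : measurableType d) (R : realType).
Variable P : probability T R.

Definition sub_sigma (G : set (set T)) : Prop :=
  sigma_algebra setT G /\ G `<=` measurable.

Definition Gmeas (G : set (set T)) (f : T -> R) : Prop :=
  forall B : set R, measurable B -> G (f @^-1` B).

(* a vector lattice of (representatives of) random variables, each of which
   is "meas"-measurable, closed under multiplication by indicators of sets in S *)
Definition vlattice_ind (meas : (T -> R) -> Prop) (S : set (set T))
    (L : set (T -> R)) : Prop :=
  (forall X, L X -> meas X) /\
  [/\ L (cst 0),
      (forall X Y, L X -> L Y -> L (X \+ Y)),
      (forall (c : R) X, L X -> L (fun x => c * X x)),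
      (forall X Y, L X -> L Y -> L (fun x => Num.max (X x) (Y x))) &
      (forall X A, L X -> S A -> L (fun x => X x * \1_A x))].

(* Z is (the density of) an element of the order continuous dual of L:
   the functional X |-> E_P[Z X] is defined on L (Z X integrable) and is
   (sigma-)order continuous *)
Definition in_ocdual (L : set (T -> R)) (Z : T -> R) : Prop :=
  [/\ P.-integrable setT (fun x => (Z x)%:E),
      (forall X, L X -> P.-integrable setT (fun x => (Z x * X x)%:E)) &
      (forall Xn : nat -> T -> R, (forall n, L (Xn n)) ->
        (forall n, {ae P, forall x, Xn n.+1 x <= Xn n x}) ->
        {ae P, forall x, (fun n => Xn n x) @ \oo --> (0:R)} ->
        (fun n => (\int[P]_x (Z x * Xn n x)%:E)%E) @ \oo --> (0%:E : \bar R))].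

(* Z is the density of a probability Q << P *)
Definition is_density (Z : T -> R) : Prop :=
  [/\ measurable_fun setT Z, {ae P, forall x, 0 <= Z x} &
      (\int[P]_x (Z x)%:E = 1%:E)%E].

(* Y is a version of E_Q[xi | G], where dQ = Z dP *)
Definition is_condexp (G : set (set T)) (Z xi Y : T -> R) : Prop :=
  [/\ Gmeas G Y, P.-integrable setT (fun x => (Y x * Z x)%:E) &
      forall A, G A ->
        (\int[P]_(x in A) (Y x * Z x)%:E = \int[P]_(x in A) (xi x * Z x)%:E)%E].

(* E_Q[xi | G] >=_Q E_Q[X | G]  (Q-a.s. = P-a.s. on {Z > 0}) *)
Definition ce_geQ (G : set (set T)) (Z xi X : T -> R) : Prop :=
  forall Yxi YX, is_condexp G Z xi Yxi -> is_condexp G Z X YX ->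
    {ae P, forall x, 0 < Z x -> YX x <= Yxi x}.

Definition REG (G : set (set T)) (LF : set (T -> R)) (pi : (T -> R) -> T -> R) :=
  forall X Y A, LF X -> LF Y -> G A ->
    {ae P, forall x, pi (fun w => X w * \1_A w + Y w * \1_(~` A) w) x
                     = pi X x * \1_A x + pi Y x * \1_(~` A) x}.

Definition Gpartition (G : set (set T)) (n : nat) (Gam : 'I_n -> set T) : Prop :=
  [/\ forall i, G (Gam i), trivIset setT Gam & \bigcup_(i in setT) Gam i = setT].

Definition piA (pi : (T -> R) -> T -> R) (A : set T) (X : T -> R) : \bar R :=
  ereal_inf [set y : \bar R | {ae P, forall x, A x -> ((pi X x)%:E <= y)%E}].

Definition piGam (pi : (T -> R) -> T -> R) (n : nat) (Gam : 'I_n -> set T)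
    (X : T -> R) : T -> \bar R :=
  fun x => (\sum_(i < n) (piA pi (Gam i) X * (\1_(Gam i) x)%:E))%E.

Definition AGamQ (G : set (set T)) (LF : set (T -> R)) (pi : (T -> R) -> T -> R)
    (n : nat) (Gam : 'I_n -> set T) (Z X : T -> R) : set (T -> \bar R) :=
  [set Y | exists xi, LF xi /\ ce_geQ G Z xi X /\ Y = piGam pi Gam xi].

Definition down_directed (S : set (T -> \bar R)) : Prop :=
  forall Y1 Y2, S Y1 -> S Y2 -> exists2 Y3, S Y3 &
    {ae P, forall x, (Y3 x <= Y1 x)%E /\ (Y3 x <= Y2 x)%E}.

Definition is_essinf (S : set (T -> \bar R)) (K : T -> \bar R) : Prop :=
  [/\ measurable_fun [set: T] (K : T -> \bar R),
      (forall Y, S Y -> {ae P, forall x, (K x <= Y x)%E}) &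
      (forall K' : T -> \bar R, measurable_fun [set: T] K' ->
         (forall Y, S Y -> {ae P, forall x, (K' x <= Y x)%E}) ->
         {ae P, forall x, (K' x <= K x)%E})].
End defs.

(* Main.v *)
Require Import Defs.
From HB Require Import structures.
From mathcomp Require Import all_boot all_order all_algebra.
From mathcomp Require Import all_classical all_reals all_analysis.
From mathcomp Require Import measurable_realfun.
Import Order.TTheory GRing.Theory Num.Theory.
Import numFieldNormedType.Exports.
Local Open Scope classical_set_scope.
Local Open Scope ring_scope.


Set Implicit Arguments. Unset Strict Implicit. Unset Printing Implicit Defensive.

Section aux.
Context (d : measure_display) (T : measurableType d) (R : realType)
  (P : probability T R) (G : set (set T)).
Hypothesis sG : sub_sigma G.
Local Notation TG := (g_sigma_algebraType G).

Lemma mTG : (measurable : set (set TG)) = G.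
Proof. exact: measurable_g_measurableTypeE sG.1. Qed.

Lemma GmeasP (f : T -> R) : Gmeas G f <-> measurable_fun setT (f : TG -> R).
Proof.
split => [Gf _ B mB|mf B mB]; first by rewrite setTI mTG; exact: Gf.
by have := mf measurableT B mB; rewrite setTI mTG.
Qed.

Lemma GF A : G A -> measurable A.
Proof. exact: sG.2. Qed.

Lemma Gmeas_meas (f : T -> R) : Gmeas G f -> measurable_fun setT f.
Proof. by move=> Gf _ B mB; rewrite setTI; apply: GF; exact: Gf. Qed.
End aux.

Set Implicit Arguments. Unset Strict Implicit. Unset Printing Implicit Defensive.

Section cmp.
Context (d : measure_display) (T : measurableType d) (R : realType)
  (P : probability T R) (G : set (set T)).
Hypothesis sG : sub_sigma G.
Local Notation TG := (g_sigma_algebraType G).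
Local Open Scope ereal_scope.

Lemma cmp (Z Y1 Y2 : T -> R) :
  measurable_fun setT Z -> {ae P, forall x, (0 <= Z x)%R} ->
  Gmeas G Y1 -> Gmeas G Y2 ->
  P.-integrable setT (fun x => (Y1 x * Z x)%:E) ->
  P.-integrable setT (fun x => (Y2 x * Z x)%:E) ->
  (forall A, G A -> \int[P]_(x in A) (Y1 x * Z x)%:E <= \int[P]_(x in A) (Y2 x * Z x)%:E) ->
  {ae P, forall x, (0 < Z x)%R -> (Y1 x <= Y2 x)%R}.
Proof.
move=> mZ Z0 G1 G2 i1 i2 le12.
pose A := [set x | (Y2 x < Y1 x)%R].
have GA : G A.
  rewrite -(mTG sG).
  have := measurable_fun_ltr ((GmeasP sG _).1 G2) ((GmeasP sG _).1 G1) measurableT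
    (Y:=[set true]) I.
  rewrite setTI; suff -> : A = (fun x => (Y2 x < Y1 x)%R) @^-1` [set true] by [].
  by apply/seteqP; split => x /= h //; apply/eqP.
have mA : measurable A := GF sG GA.
have mY1 := Gmeas_meas sG G1; have mY2 := Gmeas_meas sG G2.
pose g x := ((Y1 x - Y2 x) * Z x)%R.
have mg : measurable_fun setT (EFin \o g).
  apply/measurable_EFinP; apply: measurable_funM => //; exact: measurable_funB.
have intA : \int[P]_(x in A) (g x)%:E <= 0.
  rewrite (_ : (fun x => (g x)%:E) = (fun x => (Y1 x * Z x)%:E - (Y2 x * Z x)%:E)); last first.
    by apply/funext => x; rewrite /g mulrBl.
  rewrite (@integralB_EFin _ _ _ _ _ (fun x => Y1 x * Z x)%R (fun x => Y2 x * Z x)%R) //.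
  - by rewrite sube_le0 le12.
  - exact: integrableS i1.
  - exact: integrableS i2.
have absg : \int[P]_(x in A) `|(g x)%:E| = \int[P]_(x in A) (g x)%:E.
  apply: ae_eq_integral => //.
  - apply: measurableT_comp => //; exact: measurable_funS mg.
  - exact: measurable_funS mg.
  apply: filterS Z0 => x Zx Ax; rewrite gee0_abs // lee_fin /g mulr_ge0 //.
  by rewrite subr_ge0 ltW.
have : \int[P]_(x in A) `|(g x)%:E| = 0.
  by apply/eqP; rewrite eq_le integral_ge0 ?andbT ?absg // => x _; exact: abse_ge0.
move/(ae_eq_integral_abs P mA (measurable_funS measurableT (subsetT A) mg)).
rewrite /ae_eq; apply: filterS => x h Zx; rewrite leNgt; apply/negP => hx.
have := h hx; rewrite /g /cst => -[] /eqP; rewrite mulf_eq0 subr_eq0 => /orP[/eqP e|/eqP e].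
  by move: hx; rewrite e ltxx.
by move: Zx; rewrite e ltxx.
Qed.
End cmp.

Set Implicit Arguments. Unset Strict Implicit. Unset Printing Implicit Defensive.

Definition posp {T} {R : realType} (Z : T -> R) := fun x => Num.max (Z x) 0%R.

Section densQ.
Context (d : measure_display) (T : measurableType d) (R : realType)
  (P : probability T R) (Z : T -> R).
Hypothesis mZ : measurable_fun setT Z.
Hypothesis iZp : P.-integrable setT (fun x => (posp Z x)%:E).
Local Open Scope ereal_scope.
Local Open Scope charge_scope.

Lemma mZp : measurable_fun setT (posp Z).
Proof. exact: measurable_maxr. Qed.

Lemma Zp_ge0 x : (0 <= posp Z x)%R.
Proof. by rewrite /posp le_max lexx orbT. Qed.

Definition Qd (A : set T) := \int[P]_(x in A) (posp Z x)%:E.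

Let Qd0 : Qd set0 = 0. Proof. exact: integral_set0. Qed.
Let Qd_ge0 A : 0 <= Qd A.
Proof. by apply: integral_ge0 => x _; rewrite lee_fin Zp_ge0. Qed.
Let Qd_ssa : semi_sigma_additive Qd.
Proof.
apply: (@semi_sigma_additive_nng_induced _ _ _ P (fun x => (posp Z x)%:E)).
- by apply/measurable_EFinP; exact: mZp.
- by move=> x; rewrite lee_fin Zp_ge0.
Qed.
HB.instance Definition _ := isMeasure.Build _ _ _ Qd Qd0 Qd_ge0 Qd_ssa.

Let Qd_fin : fin_num_fun Qd.
Proof. by move=> A mA; apply: integrable_fin_num => //; apply: (integrableS measurableT mA _ iZp). Qed.
HB.instance Definition _ := @Measure_isFinite.Build _ _ _ Qd Qd_fin.

Lemma Qd_ac : Qd `<< P.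
Proof.
apply/null_content_dominatesP => A mA PA0.
rewrite /Qd (_ : (fun x => _) = (fun x => `|(posp Z x)%:E|)); last first.
  by apply/funext => x; rewrite gee0_abs // lee_fin Zp_ge0.
apply: integral_abs_eq0 => //; apply/measurable_EFinP; apply: measurable_funS mZp => //.
Qed.

Lemma intQ (g : T -> \bar R) E : measurable E -> Qd.-integrable E g ->
  \int[Qd]_(x in E) g x = \int[P]_(x in E) (g x * (posp Z x)%:E).
Proof.
move=> mE ig.
rewrite -(Radon_Nikodym_change_of_variables Qd_ac mE ig).
have ae1 : ae_eq P setT ('d (charge_of_finite_measure Qd) '/d P) (fun x => (posp Z x)%:E).
  apply: integral_ae_eq => //.
  - apply: Radon_Nikodym_integrable; exact: Qd_ac.
  - by apply/measurable_EFinP; exact: mZp.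
  move=> F _ mF; rewrite -Radon_Nikodym_integral //; exact: Qd_ac.
apply: ae_eq_integral => //.
- apply: emeasurable_funM; first exact: (measurable_int _ ig).
  by apply: measurable_funTS; apply: measurable_int; apply: Radon_Nikodym_integrable; exact: Qd_ac.
- apply: emeasurable_funM; first exact: (measurable_int _ ig).
  by apply/measurable_EFinP; apply: measurable_funTS; exact: mZp.
by apply: filterS ae1 => x h Ex; rewrite h.
Qed.

Variable G : set (set T).
Hypothesis sG : sub_sigma G.
Local Notation TG := (g_sigma_algebraType G).
Definition idG : T -> TG := id.
Lemma mid : measurable_fun setT idG.
Proof. move=> _ B; rewrite (mTG sG) setTI => GB; exact: (GF sG GB). Qed.

Definition QG : set TG -> \bar R := pushforward Qd idG.
Let QG0 : QG set0 = 0. Proof. by rewrite /QG /pushforward preimage_set0 measure0. Qed.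
Let QGge0 A : 0 <= QG A. Proof. rewrite /QG /pushforward; apply: measure_ge0. Qed.
Let QGssa : semi_sigma_additive QG.
Proof.
move=> F mF tF mUF; rewrite /QG /pushforward preimage_bigcup.
apply: measure_semi_sigma_additive.
- by move=> n; rewrite -[X in measurable X]setTI; exact: mid.
- apply/trivIsetP => /= i j _ _ ij; rewrite -preimage_setI.
  by move/trivIsetP : tF => /(_ _ _ _ _ ij) ->//; rewrite preimage_set0.
- by rewrite -preimage_bigcup -[X in measurable X]setTI; exact: mid.
Qed.
HB.instance Definition _ := isMeasure.Build _ _ _ QG QG0 QGge0 QGssa.
Let QG_fin : fin_num_fun QG.
Proof.
move=> A mA; rewrite /QG /pushforward; apply: fin_num_measure.
by rewrite -[X in measurable X]setTI; exact: mid.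
Qed.
HB.instance Definition _ := @Measure_isFinite.Build _ _ _ QG QG_fin.

Lemma trQ (D : set TG) (f : TG -> \bar R) : measurable_fun setT f ->
  Qd.-integrable (idG @^-1` D) (f \o idG) -> measurable D ->
  \int[QG]_(y in D) f y = \int[Qd]_(x in D) f x.
Proof.
move=> mf fi mD.
have h := (@integral_pushforward _ _ _ _ _ idG mid Qd D f mf fi mD).
by rewrite -h.
Qed.

Lemma trQ0 (D : set TG) (f : TG -> \bar R) : measurable_fun setT f ->
  (forall x, 0 <= f x) -> measurable D ->
  \int[QG]_(y in D) f y = \int[Qd]_(x in D) f x.
Proof.
move=> mf f0 mD.
have h := (@ge0_integral_pushforward _ _ _ _ _ idG mid Qd D f mD
   (measurable_funTS mf) (fun x _ => f0 x)).
by rewrite -h.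
Qed.

Variable xi : T -> R.
Hypothesis mxi : measurable_fun setT xi.
Hypothesis ixi : P.-integrable setT (fun x => (xi x * posp Z x)%:E).

Definition NG : set TG -> \bar R := fun A => \int[P]_(x in A) (xi x * posp Z x)%:E.
Let NG0 : NG set0 = 0. Proof. exact: integral_set0. Qed.
Let NGfin A : measurable A -> NG A \is a fin_num.
Proof.
rewrite (mTG sG) => GA; apply: integrable_fin_num; first exact: (GF sG GA).
exact: (integrableS measurableT (GF sG GA) _ ixi).
Qed.
Let NGssa : semi_sigma_additive NG.
Proof.
move=> F mF tF mUF.
have := @charge_semi_sigma_additive _ _ _ (induced_charge ixi) F.
apply.
- by move=> n; move: (mF n); rewrite (mTG sG) => /(GF sG).
- exact: tF.
- by move: mUF; rewrite (mTG sG) => /(GF sG).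
Qed.
HB.instance Definition _ := isCharge.Build _ _ _ NG NG0 NGfin NGssa.

Lemma NG_ac : NG `<< QG.
Proof.
apply/null_content_dominatesP => A mA QA0.
have GA : G A by rewrite -(mTG sG).
have mA' : measurable (A : set T) := GF sG GA.
have mEZ : measurable_fun (A : set T) (fun x : T => (posp Z x)%:E).
  by apply/measurable_EFinP; apply: measurable_funTS; exact: mZp.
have h0 : \int[P]_(x in A) `|(posp Z x)%:E| = 0.
  rewrite -QA0 /QG /pushforward /Qd; apply: eq_integral => x _.
  by rewrite gee0_abs // lee_fin Zp_ge0.
have ae0 := (ae_eq_integral_abs P mA' mEZ).1 h0.
rewrite /NG (ae_eq_integral (cst 0)) ?integral0 //.
- apply/measurable_EFinP; apply: measurable_funTS; apply: measurable_funM => //.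
  exact: mZp.
- apply: filterS ae0 => x h Ax; move: (h Ax); rewrite /cst => -[] ->.
  by rewrite mulr0.
Qed.

Definition fG := 'd NG '/d QG.
Definition Ycond x := fine (fG x).

Lemma fG_fin x : fG x \is a fin_num.
Proof. exact: (Radon_Nikodym_fin_num x NG_ac). Qed.

Lemma fG_int : QG.-integrable setT fG.
Proof. exact: (Radon_Nikodym_integrable NG_ac). Qed.

Lemma mfG : measurable_fun setT fG.
Proof. exact: (measurable_int _ fG_int). Qed.

Lemma fGQ_int : Qd.-integrable setT fG.
Proof.
apply/integrableP; split; first exact: (measurableT_comp mfG mid).
rewrite -(@trQ0 setT (fun y => `|fG y|)) //.
- by move/integrableP : fG_int => [].
- by apply: measurableT_comp => //; exact: mfG.
Qed.

Lemma Ycond_EFin x : (Ycond x)%:E = fG x.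
Proof. by rewrite /Ycond fineK // fG_fin. Qed.

Lemma Ycond_G : Gmeas G Ycond.
Proof.
apply/(GmeasP sG); apply: measurableT_comp => //; exact: mfG.
Qed.

Lemma Ycond_int : P.-integrable setT (fun x => (Ycond x * posp Z x)%:E).
Proof.
apply/integrableP; split.
  apply/measurable_EFinP; apply: measurable_funM; last exact: mZp.
  exact: (Gmeas_meas sG Ycond_G).
rewrite (_ : (fun x => _) = (fun x => `|fG x| * (posp Z x)%:E)); last first.
  apply/funext => x; rewrite EFinM abseM Ycond_EFin.
  by rewrite (@gee0_abs _ (posp Z x)%:E) // lee_fin Zp_ge0.
rewrite -intQ //; last exact: integrable_abse fGQ_int.
by move/integrableP : fGQ_int => [].
Qed.

Lemma Ycond_eq A : G A ->
  \int[P]_(x in A) (Ycond x * posp Z x)%:E = \int[P]_(x in A) (xi x * posp Z x)%:E.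
Proof.
move=> GA; have mA : measurable (A : set T) := GF sG GA.
have mA' : measurable (A : set TG) by rewrite (mTG sG).
transitivity (\int[P]_(x in A) (fG x * (posp Z x)%:E)).
  by apply: eq_integral => x _; rewrite EFinM Ycond_EFin.
rewrite -intQ //; last exact: (integrableS measurableT mA _ fGQ_int).
rewrite -(@trQ A fG) //; first by rewrite -(Radon_Nikodym_integral NG_ac mA').
- exact: mfG.
- exact: (integrableS measurableT mA _ fGQ_int).
Qed.

End densQ.

Set Implicit Arguments. Unset Strict Implicit. Unset Printing Implicit Defensive.

Section wrap.
Context (d : measure_display) (T : measurableType d) (R : realType)
  (P : probability T R).
Local Open Scope ereal_scope.

Lemma ae_int (f g : T -> R) A : measurable A ->
  measurable_fun setT f -> measurable_fun setT g -> {ae P, forall x, f x = g x} ->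
  \int[P]_(x in A) (f x)%:E = \int[P]_(x in A) (g x)%:E.
Proof.
move=> mA mf mg fg; apply: ae_eq_integral => //.
- by apply/measurable_EFinP; exact: measurable_funTS.
- by apply/measurable_EFinP; exact: measurable_funTS.
by apply: filterS fg => x -> _.
Qed.

Lemma ae_integrable (f g : T -> R) :
  measurable_fun setT f -> measurable_fun setT g -> {ae P, forall x, f x = g x} ->
  P.-integrable setT (fun x => (f x)%:E) -> P.-integrable setT (fun x => (g x)%:E).
Proof.
move=> mf mg fg /integrableP [_ fi]; apply/integrableP; split.
  exact/measurable_EFinP.
rewrite (ae_eq_integral (fun x => `|(f x)%:E|)) //.
- by apply: measurableT_comp => //; exact/measurable_EFinP.
- by apply: measurableT_comp => //; exact/measurable_EFinP.
by apply: filterS fg => x -> _.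
Qed.

Variable Z : T -> R.
Hypothesis dZ : is_density P Z.

Lemma aeZp : {ae P, forall x, posp Z x = Z x}.
Proof.
case: dZ => _ Z0 _; apply: filterS Z0 => x Zx.
by rewrite /posp; apply/max_idPl.
Qed.

Lemma mZ' : measurable_fun setT Z. Proof. by case: dZ. Qed.

Lemma ae_mulZ (h : T -> R) : {ae P, forall x, h x * posp Z x = h x * Z x}%R.
Proof. by apply: filterS aeZp => x ->. Qed.

Lemma iZp : P.-integrable setT (fun x => (posp Z x)%:E).
Proof.
apply/integrableP; split; first by apply/measurable_EFinP; exact: mZp mZ'.
rewrite (ae_eq_integral (fun x => (Z x)%:E)) //.
- by case: dZ => _ _ ->; exact: ltey.
- by apply: measurableT_comp => //; apply/measurable_EFinP; exact: mZp mZ'.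
- by apply/measurable_EFinP; exact: mZ'.
apply: filterS aeZp => x h _; rewrite -h gee0_abs // lee_fin; exact: Zp_ge0.
Qed.

Lemma ce_exists (G : set (set T)) (sG : sub_sigma G) (xi : T -> R) :
  measurable_fun setT xi -> P.-integrable setT (fun x => (Z x * xi x)%:E) ->
  exists Y, is_condexp P G Z xi Y.
Proof.
move=> mxi ixZ.
have mZp' := mZp mZ'.
have ixi : P.-integrable setT (fun x => (xi x * posp Z x)%:E).
  apply: (ae_integrable (f := fun x => Z x * xi x)%R).
  - by apply: measurable_funM => //; exact: mZ'.
  - exact: measurable_funM.
  - by apply: filterS aeZp => x ->; rewrite mulrC.
  - exact: ixZ.
pose Y := Ycond mZ' iZp sG ixi.
have GY : Gmeas G Y := Ycond_G mZ' iZp sG mxi ixi.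
have mY := Gmeas_meas sG GY.
exists Y; split => //.
- apply: (ae_integrable (f := fun x => Y x * posp Z x)%R).
  + exact: measurable_funM.
  + by apply: measurable_funM => //; exact: mZ'.
  + exact: ae_mulZ.
  + exact: (Ycond_int mZ' iZp sG mxi ixi).
- move=> A GA; have mA := GF sG GA.
  have mZ2 := mZ'.
  have e1 : \int[P]_(x in A) (Y x * Z x)%:E = \int[P]_(x in A) (Y x * posp Z x)%:E.
    apply: ae_int => //; try exact: measurable_funM.
    by apply: filterS aeZp => x ->.
  have e2 : \int[P]_(x in A) (xi x * Z x)%:E = \int[P]_(x in A) (xi x * posp Z x)%:E.
    apply: ae_int => //; try exact: measurable_funM.
    by apply: filterS aeZp => x ->.
  rewrite e1 e2; exact: (Ycond_eq mZ' iZp sG mxi ixi GA).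
Qed.
End wrap.

Set Implicit Arguments. Unset Strict Implicit. Unset Printing Implicit Defensive.

Section ints.
Context (d : measure_display) (T : measurableType d) (R : realType)
  (P : probability T R).
Local Open Scope ereal_scope.

Lemma int_split (h : T -> R) A B : measurable A -> measurable B ->
  measurable_fun setT h ->
  \int[P]_(x in A) (h x)%:E =
  \int[P]_(x in A `&` B) (h x)%:E + \int[P]_(x in A `&` ~` B) (h x)%:E.
Proof.
move=> mA mB mh.
rewrite -integral_setU //; first by rewrite -setIUr setUCr setIT.
- exact: measurableI.
- by apply: measurableI => //; exact: measurableC.
- by apply/measurable_EFinP; exact: measurable_funTS.
- rewrite /disj_set; apply/eqP/seteqP; split => x //=.
  by move=> [[_ ?] [_ ?]].
Qed.

Lemma le_ae_int (f g : T -> R) A : measurable A ->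
  P.-integrable setT (fun x => (f x)%:E) -> P.-integrable setT (fun x => (g x)%:E) ->
  {ae P, forall x, (f x <= g x)%R} ->
  \int[P]_(x in A) (f x)%:E <= \int[P]_(x in A) (g x)%:E.
Proof.
move=> mA fi gi fg.
have fiA := integrableS measurableT mA (subsetT A) fi.
have giA := integrableS measurableT mA (subsetT A) gi.
have mf : measurable_fun setT f by apply/measurable_EFinP; exact: measurable_int fi.
have mg : measurable_fun setT g by apply/measurable_EFinP; exact: measurable_int gi.
rewrite -subre_ge0; last exact: integrable_fin_num.
rewrite -(@integralB_EFin _ _ _ _ _ g f) //.
rewrite (ae_eq_integral (fun x => (posp (fun x => g x - f x)%R x)%:E)) //.
- by apply: integral_ge0 => x _; rewrite lee_fin Zp_ge0.
- apply: measurable_funTS; apply: emeasurable_funB; exact/measurable_EFinP.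
- apply/measurable_EFinP; apply: measurable_funTS; apply: mZp.
  exact: measurable_funB.
apply: filterS fg => x h _; rewrite /posp /=.
by rewrite (max_idPl _) // subr_ge0.
Qed.
End ints.

Set Implicit Arguments. Unset Strict Implicit. Unset Printing Implicit Defensive.

Section ceq.
Context (d : measure_display) (T : measurableType d) (R : realType)
  (P : probability T R) (G : set (set T)) (LF : set (T -> R)).
Hypothesis sG : sub_sigma G.
Hypothesis hLF : vlattice_ind (measurable_fun setT) measurable LF.
Variables (X Z : T -> R).
Hypothesis LFX : LF X.
Hypothesis hZ : in_ocdual P LF Z.
Hypothesis dZ : is_density P Z.
Local Open Scope ereal_scope.

Lemma mLF xi : LF xi -> measurable_fun setT xi.
Proof. exact: hLF.1. Qed.

Lemma iLF xi : LF xi -> P.-integrable setT (fun x => (xi x * Z x)%:E).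
Proof.
move=> Lxi; case: hZ => _ h _; rewrite (_ : (fun x => _) = (fun x => (Z x * xi x)%:E)).
  exact: h.
by apply/funext => x; rewrite mulrC.
Qed.

Definition Pge (xi : T -> R) := forall A, G A ->
  \int[P]_(x in A) (X x * Z x)%:E <= \int[P]_(x in A) (xi x * Z x)%:E.

Lemma Z0 : {ae P, forall x, (0 <= Z x)%R}.
Proof. by case: dZ. Qed.

Lemma Pge_ce xi : Pge xi -> ce_geQ P G Z xi X.
Proof.
move=> hxi Yxi YX [GYxi iYxi eqxi] [GYX iYX eqX].
apply: (cmp sG (mZ' dZ) Z0) => // A GA.
by rewrite eqxi // eqX //; exact: hxi.
Qed.

Lemma ce_Pge xi : LF xi -> ce_geQ P G Z xi X -> Pge xi.
Proof.
move=> Lxi hce A GA.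
have [W hW] : exists Y, is_condexp P G Z xi Y.
  apply: ce_exists => //; first exact: mLF.
  by case: hZ => _ h _; exact: h.
have [V hV] : exists Y, is_condexp P G Z X Y.
  apply: ce_exists => //; first exact: mLF.
  by case: hZ => _ h _; exact: h.
have h := hce W V hW hV.
case: hW => GW iW eW; case: hV => GV iV eV.
rewrite -eW // -eV //; apply: le_ae_int => //; first exact: (GF sG GA).
apply: filterS2 h Z0 => x hx zx.
move: zx; rewrite le0r => /orP[/eqP ->|zp]; first by rewrite !mulr0.
by apply: ler_wpM2r; [exact: ltW | exact: hx].
Qed.

Definition gl (xi1 xi2 : T -> R) (B : set T) :=
  fun w => (xi1 w * \1_B w + xi2 w * \1_(~` B) w)%R.

Lemma LF_glue xi1 xi2 B : LF xi1 -> LF xi2 -> G B -> LF (gl xi1 xi2 B).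
Proof.
move=> L1 L2 GB; case: hLF => _ [_ hadd _ _ hind].
have mB := GF sG GB.
apply: (hadd (fun w => xi1 w * \1_B w)%R (fun w => xi2 w * \1_(~` B) w)%R).
  exact: hind.
by apply: hind => //; exact: measurableC.
Qed.

Lemma Pge_glue xi1 xi2 B : LF xi1 -> LF xi2 -> G B -> Pge xi1 -> Pge xi2 ->
  Pge (gl xi1 xi2 B).
Proof.
move=> L1 L2 GB h1 h2 A GA.
have mA := GF sG GA; have mB := GF sG GB.
have GAB : G (A `&` B).
  by rewrite -(mTG sG); apply: measurableI; rewrite (mTG sG).
have GAB' : G (A `&` ~` B).
  rewrite -(mTG sG); apply: measurableI; first by rewrite (mTG sG).
  by apply: measurableC; rewrite (mTG sG).
have mZ := mZ' dZ.
have mX := mLF LFX.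
rewrite (@int_split _ _ _ P (fun x => X x * Z x)%R A B mA mB); last exact: measurable_funM.
rewrite (@int_split _ _ _ P (fun x => gl xi1 xi2 B x * Z x)%R A B mA mB); last first.
  by apply: measurable_funM => //; apply: mLF; exact: LF_glue.
apply: leeD.
  apply: (le_trans (h1 _ GAB)); rewrite le_eqVlt; apply/orP; left; apply/eqP.
  apply: eq_integral => x /set_mem [_ Bx]; congr (_%:E); rewrite /gl.
  by rewrite indicE mem_set // indicE memNset //= mulr1 mulr0 addr0.
apply: (le_trans (h2 _ GAB')); rewrite le_eqVlt; apply/orP; left; apply/eqP.
apply: eq_integral => x /set_mem [_ Bx]; congr (_%:E); rewrite /gl.
by rewrite indicE memNset // indicE mem_set //= mulr1 mulr0 add0r.
Qed.

End ceq.

Set Implicit Arguments. Unset Strict Implicit. Unset Printing Implicit Defensive.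

Section pis.
Context (d : measure_display) (T : measurableType d) (R : realType)
  (P : probability T R) (G : set (set T)) (LF : set (T -> R))
  (pi : (T -> R) -> T -> R).
Hypothesis hREG : REG P G LF pi.
Variables (n : nat) (Gam : 'I_n -> set T).
Hypothesis hGam : Gpartition G Gam.
Local Open Scope ereal_scope.

Lemma piA_ae A (xi xi' : T -> R) :
  {ae P, forall x, A x -> pi xi x = pi xi' x} -> piA P pi A xi = piA P pi A xi'.
Proof.
move=> h; congr ereal_inf; apply/seteqP; split => y /= hy.
  by apply: filterS2 h hy => x e h' Ax; rewrite -e //; exact: h' Ax.
by apply: filterS2 h hy => x e h' Ax; rewrite e //; exact: h' Ax.
Qed.

Lemma glue_piA1 B A xi1 xi2 : LF xi1 -> LF xi2 -> G B -> A `<=` B ->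
  piA P pi A (gl xi1 xi2 B) = piA P pi A xi1.
Proof.
move=> L1 L2 GB AB; apply: piA_ae.
apply: filterS (hREG L1 L2 GB) => x h Ax; rewrite /gl h.
have Bx : B x := AB x Ax.
by rewrite !indicE (mem_set Bx) memNset //= ?mulr1 ?mulr0 ?addr0.
Qed.

Lemma glue_piA2 B A xi1 xi2 : LF xi1 -> LF xi2 -> G B -> A `<=` ~` B ->
  piA P pi A (gl xi1 xi2 B) = piA P pi A xi2.
Proof.
move=> L1 L2 GB AB; apply: piA_ae.
apply: filterS (hREG L1 L2 GB) => x h Ax; rewrite /gl h.
have Bx : (~` B) x := AB x Ax.
by rewrite !indicE (mem_set Bx) memNset //= ?mulr1 ?mulr0 ?add0r.
Qed.

Lemma cell_disj i j x : Gam i x -> Gam j x -> i = j.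
Proof.
by case: hGam => _ tr _ hi hj; apply: tr => //; exists x; split.
Qed.

Lemma cellcover x : exists i, Gam i x.
Proof.
case: hGam => _ _ cov.
have : (\bigcup_(i in setT) Gam i) x by rewrite cov.
by case=> i _ h; exists i.
Qed.

Lemma sum_cell (b : 'I_n -> \bar R) i x : Gam i x ->
  \sum_(j < n) (b j * (\1_(Gam j) x)%:E) = b i.
Proof.
move=> gi; rewrite (bigD1 i) //= big1 ?adde0.
  by rewrite indicE mem_set // mule1.
move=> j ji; rewrite indicE memNset ?mule0 //.
by move=> gj; move: ji; rewrite (cell_disj gi gj) eqxx.
Qed.

Lemma piGam_cell xi i x : Gam i x -> piGam P pi Gam xi x = piA P pi (Gam i) xi.
Proof. exact: sum_cell. Qed.

End pis.

Set Implicit Arguments. Unset Strict Implicit. Unset Printing Implicit Defensive.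

Section main.
Context (d : measure_display) (T : measurableType d) (R : realType)
  (P : probability T R) (G : set (set T)) (LF : set (T -> R))
  (pi : (T -> R) -> T -> R).
Hypothesis sG : sub_sigma G.
Hypothesis hLF : vlattice_ind (measurable_fun setT) measurable LF.
Hypothesis hREG : REG P G LF pi.
Variables (n : nat) (Gam : 'I_n -> set T) (X Z : T -> R).
Hypothesis hGam : Gpartition G Gam.
Hypothesis LFX : LF X.
Hypothesis hZ : in_ocdual P LF Z.
Hypothesis dZ : is_density P Z.
Local Open Scope ereal_scope.

Local Notation a i xi := (piA P pi (Gam i) xi).

Definition Sset xi := LF xi /\ ce_geQ P G Z xi X.

Lemma SX : Sset X.
Proof. by split => //; apply: (Pge_ce sG dZ) => A GA. Qed.

Definition Bset xi1 xi2 := \bigcup_(i in [set i | a i xi1 <= a i xi2]) Gam i.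

Lemma GBset xi1 xi2 : G (Bset xi1 xi2).
Proof.
rewrite -(mTG sG); apply: fin_bigcup_measurable; first exact: finite_finset.
by move=> i _; rewrite (mTG sG); case: hGam.
Qed.

Definition dglue xi1 xi2 := gl xi1 xi2 (Bset xi1 xi2).

Lemma dglue_a xi1 xi2 i : LF xi1 -> LF xi2 ->
  a i (dglue xi1 xi2) = Order.min (a i xi1) (a i xi2).
Proof.
move=> L1 L2; rewrite minEle; case: ifPn => h.
  apply: (glue_piA1 hREG) => //; first exact: GBset.
  by move=> x gx; exists i.
apply: (glue_piA2 hREG) => //; first exact: GBset.
move=> x gx [j hj gj]; move: h; rewrite (cell_disj hGam gx gj).
by rewrite hj.
Qed.

Lemma dglue_S xi1 xi2 : Sset xi1 -> Sset xi2 -> Sset (dglue xi1 xi2).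
Proof.
move=> [L1 c1] [L2 c2]; split; first by apply: (LF_glue sG hLF) => //; exact: GBset.
apply: (Pge_ce sG dZ); apply: (Pge_glue sG hLF LFX dZ) => //.
- exact: GBset.
- exact: (ce_Pge sG hLF LFX hZ dZ).
- exact: (ce_Pge sG hLF LFX hZ dZ).
Qed.

Definition combl (s : seq 'I_n) (F : 'I_n -> T -> R) :=
  foldr (fun i acc => dglue (F i) acc) X s.

Lemma combl_S s F : (forall i, Sset (F i)) -> Sset (combl s F).
Proof. by move=> hF; elim: s => [|j s IH] /=; [exact: SX|exact: dglue_S]. Qed.

Lemma combl_le s F : (forall i, Sset (F i)) -> forall i, i \in s ->
  a i (combl s F) <= a i (F i).
Proof.
move=> hF; elim: s => [//|j s IH] i; rewrite inE => /orP[/eqP ->|ins] /=.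
  rewrite dglue_a; [|exact: (hF j).1|exact: (combl_S s hF).1].
  by rewrite ge_min lexx.
rewrite dglue_a; [|exact: (hF j).1|exact: (combl_S s hF).1].
by rewrite ge_min (IH i ins) orbT.
Qed.

Fixpoint etaf (zeta : nat -> T -> R) (m : nat) : T -> R :=
  match m with 0 => zeta 0%N | m'.+1 => dglue (etaf zeta m') (zeta m'.+1) end.

Lemma etaf_S zeta : (forall k, Sset (zeta k)) -> forall m, Sset (etaf zeta m).
Proof. by move=> hz; elim => [|m IH] /=; [exact: hz|exact: dglue_S]. Qed.

Lemma etaf_dec zeta : (forall k, Sset (zeta k)) -> forall m i,
  a i (etaf zeta m.+1) <= a i (etaf zeta m).
Proof.
move=> hz m i /=; rewrite dglue_a; [|exact: (etaf_S hz m).1|exact: (hz _).1].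
by rewrite ge_min lexx.
Qed.

Lemma etaf_le zeta : (forall k, Sset (zeta k)) -> forall m i,
  a i (etaf zeta m) <= a i (zeta m).
Proof.
move=> hz [|m] i //=; rewrite dglue_a; [|exact: (etaf_S hz m).1|exact: (hz _).1].
by rewrite ge_min lexx orbT.
Qed.


Lemma main_res : down_directed P (AGamQ P G LF pi Gam Z X) /\
  exists eta : nat -> T -> R,
    [/\ forall m, LF (eta m) /\ ce_geQ P G Z (eta m) X,
        forall m, {ae P, forall x,
          (piGam P pi Gam (eta m.+1) x <= piGam P pi Gam (eta m) x)%E} &
        exists K, is_essinf P (AGamQ P G LF pi Gam Z X) K /\
          {ae P, forall x, (fun m => piGam P pi Gam (eta m) x) @ \oo --> K x}].
Proof.
split.
  move=> Y1 Y2 [x1 [L1 [c1 ->]]] [x2 [L2 [c2 ->]]].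
  have [Lg cg] := dglue_S (conj L1 c1) (conj L2 c2).
  exists (piGam P pi Gam (dglue x1 x2)); first by exists (dglue x1 x2).
  apply: aeW => x; have [i gi] := cellcover hGam x.
  rewrite !(piGam_cell P pi hGam _ gi) dglue_a //.
  by rewrite !ge_min !lexx orbT.
pose V i := [set a i xi | xi in Sset].
have V0 i : V i != set0 by apply/set0P; exists (a i X); exists X => //; exact: SX.
have hu i := ereal_inf_seq (V0 i).
pose u i := s2val (hu i).
have hx i k : exists xi, Sset xi /\ a i xi = u i k.
  by have [xi ? ?] := s2valP (hu i) k; exists xi.
pose xs i k := sval (cid (hx i k)).
have hxs i k : Sset (xs i k) /\ a i (xs i k) = u i k := svalP (cid (hx i k)).
pose zeta k := combl (enum 'I_n) (fun i => xs i k).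
have Sz k : Sset (zeta k) := combl_S _ (fun i => (hxs i k).1).
pose eta := etaf zeta.
have Se := etaf_S Sz.
have le_u i m : a i (eta m) <= u i m.
  apply: (le_trans (etaf_le Sz m i)); rewrite -(hxs i m).2.
  by apply: combl_le; [move=> j; exact: (hxs j m).1|exact: mem_enum].
pose c i := ereal_inf (V i).
have lb i xi : Sset xi -> c i <= a i xi.
  by move=> Sxi; apply: ereal_inf_lbound; exists xi.
have cv i : (fun m => a i (eta m)) @ \oo --> c i.
  apply: (@squeeze_cvge _ _ _ _ (cst (c i)) _ (u i)).
  - by apply: nearW => m; rewrite lb ?le_u //; exact: Se.
  - exact: cvg_cst.
  - exact: (s2valP' (hu i)).
exists eta; split.
- by move=> m; exact: Se.
- move=> m; apply: aeW => x; have [i gi] := cellcover hGam x.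
  by rewrite !(piGam_cell P pi hGam _ gi); exact: etaf_dec.
exists (fun x => \sum_(i < n) (c i * (\1_(Gam i) x)%:E)); split.
  split.
  - apply: emeasurable_sum => i; apply: emeasurable_funM => //.
    apply/measurable_EFinP; apply: measurable_indic.
    by case: hGam => hG _ _; exact: (GF sG (hG i)).
  - move=> Y [xi [L [ce ->]]]; apply: aeW => x; have [i gi] := cellcover hGam x.
    by rewrite (sum_cell hGam _ gi) (piGam_cell P pi hGam _ gi); exact: lb.
  - move=> K' _ hK'.
    have hm m : {ae P, forall x, K' x <= piGam P pi Gam (eta m) x}.
      by apply: hK'; exists (eta m); split; [exact: (Se m).1|split; [exact: (Se m).2|]].
    apply: filterS (ae_foralln hm) => x hxm; have [i gi] := cellcover hGam x.
    rewrite (sum_cell hGam _ gi); apply: (cvge_to_ge (cv i)).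
    by apply: nearW => m; rewrite -(piGam_cell P pi hGam _ gi); exact: hxm.
apply: aeW => x; have [i gi] := cellcover hGam x.
rewrite (sum_cell hGam _ gi).
rewrite (_ : (fun m => _) = (fun m => a i (eta m))); first exact: cv.
by apply/funext => m; rewrite (piGam_cell P pi hGam _ gi).
Qed.

End main.

Theorem lemma30 (d : measure_display) (T : measurableType d) (R : realType)
  (P : probability T R) (G : set (set T))
  (LF LG : set (T -> R)) (pi : (T -> R) -> T -> R) :
  sub_sigma G ->
  vlattice_ind (measurable_fun setT) measurable LF ->
  vlattice_ind (Gmeas G) G LG ->
  (forall X, LF X -> LG (pi X)) ->
  (forall X Y, LF X -> LF Y -> {ae P, forall x, X x = Y x} ->
     {ae P, forall x, pi X x = pi Y x}) ->
  REG P G LF pi ->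
  forall (n : nat) (Gam : 'I_n -> set T) (X Z : T -> R),
  Gpartition G Gam -> LF X -> in_ocdual P LF Z -> is_density P Z ->
  down_directed P (AGamQ P G LF pi Gam Z X) /\
  exists eta : nat -> T -> R,
    [/\ forall m, LF (eta m) /\ ce_geQ P G Z (eta m) X,
        forall m, {ae P, forall x,
          (piGam P pi Gam (eta m.+1) x <= piGam P pi Gam (eta m) x)%E} &
        exists K, is_essinf P (AGamQ P G LF pi Gam Z X) K /\
          {ae P, forall x, (fun m => piGam P pi Gam (eta m) x) @ \oo --> K x}].
Proof.
move=> sG hLF _ _ _ hREG n Gam X Z hGam LFX hZ dZ.
exact: (main_res sG hLF hREG hGam LFX hZ dZ).
Qed.
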